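(* Assume $\mathcal{T}$ is a tree. Fix $(i_0,j_0)\in\mathcal{E}$ such that $\mu_{i_0j_0}\ge\theta_{i_0}$. There is a constant $m_7$ such that for all measurable locally bounded functions $w_i,x_i$ ($i\in\mathcal{I}$) and $\psi_{ij}$ (with $\psi_{ij}=0$ for $i\not\sim j$) on $[0,\infty)$ satisfying, with $y(t):=(e\cdot x(t))^+e_{i_0}\in\mathbb{R}^I$ and $z(t):=(e\cdot x(t))^-e_{j_0}\in\mathbb{R}^J$, $$x_i(t)=w_i(t)-\sum_{j\in\mathcal{J}}\mu_{ij}\int_0^t\psi_{ij}(s)ds-\theta_i\int_0^ty_i(s)ds,\quad \sum_{j\in\mathcal{J}}\psi_{ij}=x_i-y_i\ (i\in\mathcal{I}),\quad \sum_{i\in\mathcal{I}}\psi_{ij}=-z_j\ (j\in\mathcal{J}),$$ we have $\|x(t)\|\le m_7(1+t)^{m_7}\|w\|_t^*$ for all $t\ge0$, where $m_7$ does not depend on $w$ and $t$.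
   Context: $\mathcal{I}=\{1,\dots,I\}$, $\mathcal{J}=\{I+1,\dots,I+J\}$, $\mathcal{E}\subset\mathcal{I}\times\mathcal{J}$, $i\sim j$ iff $(i,j)\in\mathcal{E}$; $\mathcal{T}$ is the bipartite graph with vertices $\mathcal{I}\cup\mathcal{J}$ and edges $\mathcal{E}$. Constants $\mu_{ij}>0$ for $(i,j)\in\mathcal{E}$, $\mu_{ij}=0$ otherwise, $\theta_i\ge0$. $e=(1,\dots,1)'$; $e_{i_0}$ (resp. $e_{j_0}$) denotes the coordinate unit vector in $\mathbb{R}^I$ (resp. $\mathbb{R}^J$, indexed by $\mathcal{J}$) for coordinate $i_0$ (resp. $j_0$); $a^\pm$ positive/negative parts. $\|x\|=\sum|x_i|$, $\|w\|_t^*=\sup_{s\le t}\|w(s)\|$. *)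

(* Defs.v *)
From HB Require Import structures.
From mathcomp Require Import all_boot all_order all_algebra.
From mathcomp Require Import all_classical all_reals all_analysis.
Set Implicit Arguments. Unset Strict Implicit. Unset Printing Implicit Defensive.
Import Order.TTheory GRing.Theory Num.Theory.
Import numFieldNormedType.Exports.
Local Open Scope classical_set_scope.
Local Open Scope ring_scope.

Definition bip_adj (nI nJ : nat) (E : 'I_nI -> 'I_nJ -> bool) :
    rel ('I_nI + 'I_nJ)%type :=
  fun u v => match u, v with
             | inl i, inr j => E i j
             | inr j, inl i => E i j
             | _, _ => false
             end.

Definition is_tree (nI nJ : nat) (E : 'I_nI -> 'I_nJ -> bool) : Prop :=
  (forall u v : ('I_nI + 'I_nJ)%type, connect (bip_adj E) u v) /\
  (forall p : seq ('I_nI + 'I_nJ)%type,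
      uniq p -> (2 < size p)%N -> ~~ cycle (bip_adj E) p).

Definition pos_part {R : realType} (a : R) : R := Num.max a 0.
Definition neg_part {R : realType} (a : R) : R := Num.max (- a) 0.

Definition integ0 {R : realType} (f : R -> R) (t : R) : R :=
  \int[lebesgue_measure]_(s in `[0, t]) f s.

Definition nonneg_half (R : realType) : set R := `[0, +oo[%classic.

Definition loc_bounded {R : realType} (f : R -> R) : Prop :=
  forall t : R, 0 <= t -> exists M : R, forall s : R, 0 <= s <= t -> `|f s| <= M.

Definition norm1 {R : realType} (n : nat) (v : 'I_n -> R) : R :=
  \sum_(i < n) `|v i|.

Definition supnorm {R : realType} (n : nat) (w : 'I_n -> R -> R) (t : R) : R :=
  sup [set norm1 (fun i => w i s) | s in `[0, t]%classic].

(* Main.v *)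
Require Import Defs.
From HB Require Import structures.
From mathcomp Require Import all_boot all_order all_algebra.
From mathcomp Require Import all_classical all_reals all_analysis.
From mathcomp Require Import ring lra.
Import Order.TTheory GRing.Theory Num.Theory.
Import numFieldNormedType.Exports.

Module GraphM.
Local Set Implicit Arguments.
Local Unset Strict Implicit.

Section Graph.
Variables (V : finType) (e : rel V).
Hypothesis esym : symmetric e.
Hypothesis eirr : irreflexive e.
Hypothesis acyc : forall p : seq V, uniq p -> 2 < size p -> ~~ cycle e p.
Variable act : {set V}.

Definition goodp (q : seq V) := [/\ q != [::], sorted e q, uniq q & all (mem act) q].

Lemma stuck (s : seq V) (l : V) :
  goodp (rcons s l) -> (forall q, goodp q -> size q <= size (rcons s l)) ->
  forall a b, a \in act -> b \in act -> e l a -> e l b -> a = b.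
Proof.
move=> [_ srt un al] mx.
have inq c : c \in act -> e l c -> c \in s.
  move=> ca lc; apply/negP => cs.
  have cl : c != l by apply/eqP => cl; move: lc; rewrite cl eirr.
  have : goodp (s ++ [:: l; c]).
    split.
    - by case: s {srt un al mx cs}.
    - by rewrite sorted_cat_cons -/(rcons s l) srt /= lc.
    - have -> : s ++ [:: l; c] = rcons (rcons s l) c by rewrite -!cats1 -catA.
      have cs2 : c \notin s by apply/negP.
      by rewrite rcons_uniq un mem_rcons in_cons negb_or cl cs2.
    - by move: al; rewrite -cats1 !all_cat /= ca !andbT => /andP[-> ->].
  move=> /mx; rewrite size_cat size_rcons /= addn2 ltnn //.
have pred c : c \in act -> e l c -> exists s1, s = rcons s1 c.
  move=> ca lc; have cin := inq c ca lc; move: srt un; case/splitPr: cin => s1 s2.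
  case: s2 => [|y s3]; first by exists s1; rewrite cats1.
  move=> srt un.
  have u' : uniq (c :: rcons (y :: s3) l).
    by move: un; rewrite rcons_cat cat_uniq => /and3P[].
  have sz : 2 < size (c :: rcons (y :: s3) l) by rewrite /= size_rcons.
  have /negP H := acyc u' sz; exfalso; apply: H.
  rewrite /cycle rcons_path; apply/andP; split.
  + by move: srt; rewrite rcons_cat sorted_cat_cons => /andP[].
  + by rewrite (last_rcons c (y :: s3) l).
move=> a b aa ba la lb.
have [s1 e1] := pred a aa la; have [s2 e2] := pred b ba lb.
by move: e2; rewrite e1 => /(congr1 (last a)); rewrite !last_rcons.
Qed.

Lemma peel (u1 u2 : V) : u1 \in act -> u2 \in act -> e u1 u2 ->
  act = [set u1; u2]%SET \/
  exists v, [/\ v \in act, v != u1, v != u2 &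
     forall a b, a \in act -> b \in act -> e v a -> e v b -> a = b].
Proof.
move=> a1 a2 e12.
case: (pselect (act = [set u1; u2]%SET)) => [|ne]; [by left|right].
apply: contrapT => H.
have Hv v : v \in act -> v != u1 -> v != u2 ->
    exists a b, [/\ a \in act, b \in act, e v a, e v b & a != b].
  move=> va v1 v2; apply: contrapT => nab; apply: H; exists v; split => //.
  move=> a b aa ba va' vb'; apply: contrapT => nab'; apply: nab.
  by exists a, b; split => //; apply/eqP.
have [v0 [v0a v01 v02]] : exists v0, [/\ v0 \in act, v0 != u1 & v0 != u2].
  apply: contrapT => nv; apply: ne; apply/setP => v; rewrite !inE; apply/idP/idP.
  - move=> va; apply: contrapT => /negP; rewrite negb_or => /andP[h1 h2].
    by apply: nv; exists v; split.
  - by case/orP => /eqP ->.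
pose P := fun n => `[< exists q, goodp q /\ size q = n >].
have exP : exists n, P n.
  by exists 1; apply/asboolP; exists [:: u1]; split => //; split => //=; rewrite a1.
have ubP : forall n, P n -> n <= #|V|.
  move=> n /asboolP [q [[_ _ un _] <-]]; rewrite -(card_uniqP un); exact: max_card.
case: (ex_maxnP exP ubP) => n /asboolP [q [gq sq]] mx.
have mxq : forall q', goodp q' -> size q' <= size q.
  by move=> q' gq'; rewrite sq; apply: mx; apply/asboolP; exists q'.
have endp s l : goodp (rcons s l) -> (forall q', goodp q' -> size q' <= size (rcons s l)) ->
    l = u1 \/ l = u2.
  move=> g m; apply: contrapT => nl.
  have la : l \in act by case: g => _ _ _; rewrite all_rcons => /andP[].
  have l1 : l != u1 by apply/eqP => h; apply: nl; left.
  have l2 : l != u2 by apply/eqP => h; apply: nl; right.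
  have [a [b [aa ba la' lb ab]]] := Hv l la l1 l2.
  by move/eqP: ab; apply; apply: (stuck g m).
case: q gq sq mxq => [[]|h t gq sq mxq]; first by [].
have hl : last h t = u1 \/ last h t = u2.
  by apply: (endp (belast h t)); rewrite -lastI.
have grev : goodp (rev (h :: t)).
  case: gq => _ srt un al; split.
  - by rewrite -size_eq0 size_rev.
  - by rewrite rev_sorted; apply: sub_sorted srt => x y; rewrite esym.
  - by rewrite rev_uniq.
  - by rewrite all_rev.
have hh : h = u1 \/ h = u2.
  apply: (endp (rev t)); rewrite -rev_cons //.
  by move=> q' /mxq; rewrite size_rev.
have [a [b [aa ba va vb ab]]] := Hv v0 v0a v01 v02.
have g3 : goodp [:: a; v0; b].
  split => //=.
  - by rewrite esym va vb.
  - have av : a != v0 by apply/eqP => h0; move: va; rewrite h0 eirr.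
    have vb' : v0 != b by apply/eqP => h0; move: vb; rewrite h0 eirr.
    by rewrite !inE !negb_or av ab vb'.
  - by rewrite aa v0a ba.
have sz := mxq _ g3.
case: gq => _ srt un _.
have hne : h != last h t.
  clear -srt un sz; case: t srt un sz => // y t' srt un _.
  move: un; rewrite cons_uniq => /andP[hn _].
  apply/eqP => hl'; move: hn; rewrite hl' /=.
  by rewrite mem_last.
have ec : e (last h t) h.
  move: hne; case: hl => ->; case: hh => ->; rewrite ?eqxx // => _.
  by rewrite esym.
have /negP := acyc un sz; apply.
by rewrite /cycle rcons_path ec andbT; exact: srt.
Qed.
End Graph.

End GraphM.
Import GraphM.

Local Open Scope classical_set_scope.
Local Open Scope ring_scope.

Section Integ.
Variable R : realType.

Lemma bnd_near (f : R -> R) (A : set R) (L : R) :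
  (forall s, A s -> `|f s| <= L) -> [bounded f x | x in A].
Proof.
move=> H; exists L; split; first exact: num_real.
move=> M hM x Ax /=; apply: le_trans (H x Ax) _; exact: ltW.
Qed.

Lemma intg_itv (f : R -> R) (L b : R) (i : interval R) :
  measurable_fun (@nonneg_half R) f ->
  [set` i] `<=` `[0, b]%classic ->
  (forall s, 0 <= s <= b -> `|f s| <= L) ->
  (@lebesgue_measure R).-integrable [set` i] (EFin \o f).
Proof.
move=> mf sub bd.
apply: measurable_bounded_integrable.
- exact: measurable_itv.
- apply: (@le_lt_trans _ _ (lebesgue_measure `[0, b])).
    apply: le_measure => //; rewrite inE; exact: measurable_itv.
  rewrite lebesgue_measure_itv /=; case: ifP => _; exact: ltry.
- apply: measurable_funS mf => //.
  + rewrite /nonneg_half; exact: measurable_itv.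
  + move=> s /sub; rewrite /nonneg_half /= !in_itv /= => /andP[-> _] //.
- apply: (@bnd_near _ _ L) => s /sub /=; rewrite in_itv /=; exact: bd.
Qed.

Lemma integ_diff (f : R -> R) (L a b : R) :
  measurable_fun (@nonneg_half R) f -> 0 <= a -> a <= b ->
  (forall s, 0 <= s <= b -> `|f s| <= L) ->
  integ0 f b - integ0 f a = \int[lebesgue_measure]_(s in `]a, b]) f s.
Proof.
move=> mf a0 ab bd; rewrite /integ0.
have -> : `[0, b]%classic = `[0, a]%classic `|` `]a, b]%classic :> set R.
  by rewrite -itv_bndbnd_setU //= bnd_simp.
rewrite Rintegral_setU //; first by rewrite addrAC subrr add0r.
- rewrite -itv_bndbnd_setU ?bnd_simp //.
  exact: (@intg_itv f L b `[0,b] mf (@subset_refl _ _) bd).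
- apply/disj_setPS => s [] /=; rewrite !in_itv /= => /andP[_ h1] /andP[h2 _].
  by have := lt_le_trans h2 h1; rewrite ltxx.
Qed.

Lemma integ_ge (f : R -> R) (L a b c : R) :
  measurable_fun (@nonneg_half R) f -> 0 <= a -> a <= b ->
  (forall s, 0 <= s <= b -> `|f s| <= L) ->
  (forall s, a < s <= b -> c <= f s) ->
  c * (b - a) <= integ0 f b - integ0 f a.
Proof.
move=> mf a0 ab bd hc; rewrite (@integ_diff f L a b mf a0 ab bd).
have sub : `]a, b]%classic `<=` `[0, b]%classic.
  by move=> s /=; rewrite !in_itv /= => /andP[h1 ->]; rewrite andbT (le_trans a0) // ltW.
have -> : c * (b - a) = \int[lebesgue_measure]_(s in `]a, b]) c.
  rewrite Rintegral_cst //= lebesgue_measure_itv /= lte_fin.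
  case: ltP => [_|ba]; first by rewrite -EFinD /=.
  have -> : b = a by apply/eqP; rewrite eq_le ab ba.
  by rewrite subrr mulr0.
apply: le_Rintegral.
- exact: measurable_itv.
- exact: (@intg_itv (fun=> c) `|c| b).
- exact: (@intg_itv f L b).
- by move=> s /=; rewrite in_itv /=; exact: hc.
Qed.

Lemma integ_le (f : R -> R) (L a b c : R) :
  measurable_fun (@nonneg_half R) f -> 0 <= a -> a <= b ->
  (forall s, 0 <= s <= b -> `|f s| <= L) ->
  (forall s, a < s <= b -> f s <= c) ->
  integ0 f b - integ0 f a <= c * (b - a).
Proof.
move=> mf a0 ab bd hc; rewrite (@integ_diff f L a b mf a0 ab bd).
have sub : `]a, b]%classic `<=` `[0, b]%classic.
  by move=> s /=; rewrite !in_itv /= => /andP[h1 ->]; rewrite andbT (le_trans a0) // ltW.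
have -> : c * (b - a) = \int[lebesgue_measure]_(s in `]a, b]) c.
  rewrite Rintegral_cst //= lebesgue_measure_itv /= lte_fin.
  case: ltP => [_|ba]; first by rewrite -EFinD /=.
  have -> : b = a by apply/eqP; rewrite eq_le ab ba.
  by rewrite subrr mulr0.
apply: le_Rintegral.
- exact: measurable_itv.
- exact: (@intg_itv f L b).
- exact: (@intg_itv (fun=> c) `|c| b).
- by move=> s /=; rewrite in_itv /=; exact: hc.
Qed.

Lemma integ_add (f g : R -> R) (L b : R) :
  measurable_fun (@nonneg_half R) f -> measurable_fun (@nonneg_half R) g ->
  (forall s, 0 <= s <= b -> `|f s| <= L) ->
  (forall s, 0 <= s <= b -> `|g s| <= L) ->
  integ0 (fun s => f s + g s) b = integ0 f b + integ0 g b.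
Proof.
move=> mf mg bf bg; rewrite /integ0 RintegralD //.
- exact: (@intg_itv f L b `[0,b] mf (@subset_refl _ _) bf).
- exact: (@intg_itv g L b `[0,b] mg (@subset_refl _ _) bg).
Qed.

Lemma integ_scale (f : R -> R) (L b c : R) :
  measurable_fun (@nonneg_half R) f ->
  (forall s, 0 <= s <= b -> `|f s| <= L) ->
  integ0 (fun s => c * f s) b = c * integ0 f b.
Proof.
move=> mf bf; rewrite /integ0 RintegralZl //.
- exact: (@intg_itv f L b `[0,b] mf (@subset_refl _ _) bf).
Qed.

Lemma integ_zero (b : R) : integ0 (fun _ => 0) b = 0.
Proof.
rewrite /integ0 Rintegral_cst ?mul0r //; exact: measurable_itv.
Qed.
End Integ.

Section Scalar.
Variable R : realType.

Lemma scalar_up (u v P : R -> R) (T V K L : R) :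
  0 <= K -> 0 <= L ->
  (forall s, 0 <= s <= T -> u s = v s - P s) ->
  (forall s, 0 <= s <= T -> `|v s| <= V) ->
  P 0 = 0 ->
  (forall a b, 0 <= a -> a <= b -> b <= T -> `|P b - P a| <= L * (b - a)) ->
  (forall a b, 0 <= a -> a <= b -> b <= T ->
     (forall s, a < s <= b -> 0 < u s) -> P a - P b <= K * (b - a)) ->
  forall t, 0 <= t <= T -> u t <= 2 * V + K * t.
Proof.
move=> K0 L0 huv hv P0 hL hK t /andP[t0 tT].
have T0 : 0 <= T := le_trans t0 tT.
have V0 : 0 <= V by apply: le_trans (hv 0 _); rewrite ?lexx ?T0.
have vlo s : 0 <= s <= T -> - V <= v s.
  by move=> hs; rewrite lerNl; apply: le_trans (hv s hs); rewrite -normrN ler_norm.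
have vhi s : 0 <= s <= T -> v s <= V.
  by move=> hs; apply: le_trans (hv s hs); rewrite ler_norm.
have htT : 0 <= t <= T by rewrite t0 tT.
case: (pselect (exists s, 0 <= s <= t /\ u s <= 0)) => [[s0 [hs0 us0]]|nA].
- set A := [set s | 0 <= s <= t /\ u s <= 0].
  have hsA : has_sup A.
    split; first by exists s0.
    by exists t => s [/andP[_ ->]].
  set tau := sup A.
  have s0tau : s0 <= tau by apply: sup_upper_bound.
  have tau0 : 0 <= tau by move: hs0 => /andP[h _]; exact: le_trans h s0tau.
  have taut : tau <= t by apply: ge_sup; [exists s0 | move=> s [/andP[_ ->]]].
  have tauT : tau <= T := le_trans taut tT.
  have key1 : - V <= P tau.
    apply/ler_addgt0Pr => e e0.
    have eps0 : 0 < e / (L + 1) by rewrite divr_gt0 // ltr_wpDl.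
    have [s [/andP[s0' st] us] hs] := sup_adherent eps0 hsA.
    have stau : s <= tau by apply: sup_upper_bound => //; split => //; rewrite s0' st.
    have sT : 0 <= s <= T by rewrite s0' (le_trans st tT).
    have Ps : - V <= P s.
      by apply: le_trans (vlo s sT) _; move: us; rewrite (huv s sT) subr_le0.
    have := hL s tau s0' stau tauT.
    have Lb : L * (tau - s) <= e.
      have : tau - s <= e / (L + 1) by rewrite lerBlDr -lerBlDl ltW.
      move=> h; have h2 := ler_wpM2l L0 h; apply: (le_trans h2).
      rewrite mulrA ler_pdivrMr ?ltr_wpDl //; nra.
    move=> h; have := le_trans h Lb.
    rewrite ler_norml => /andP[h1 _].
    move: Ps h1; set p1 := P s; set p2 := P tau; lra.
  have key2 : P tau - P t <= K * (t - tau).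
    apply: hK => // s /andP[taus st]; rewrite ltNge; apply/negP => us.
    have : A s by split => //; rewrite st (le_trans tau0 (ltW taus)).
    move=> /(sup_upper_bound hsA); rewrite leNgt taus //.
  rewrite (huv t htT).
  have : K * (t - tau) <= K * t by rewrite ler_wpM2l // lerBlDr lerDl.
  move: (vhi t htT) key1 key2; set a := v t; set b := P t; set c := P tau.
  move=> h1 h2 h3 h4; lra.
- have key : P 0 - P t <= K * (t - 0).
    apply: hK => //.
    move=> s /andP[s0 st]; rewrite ltNge; apply/negP => us; apply: nA.
    by exists s; split => //; rewrite (ltW s0) st.
  rewrite (huv t htT); move: key; rewrite P0 subr0 sub0r => key.
  have := vhi t htT; lra.
Qed.

Lemma scalar_abs (u v P : R -> R) (T V K L : R) :
  0 <= K -> 0 <= L ->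
  (forall s, 0 <= s <= T -> u s = v s - P s) ->
  (forall s, 0 <= s <= T -> `|v s| <= V) ->
  P 0 = 0 ->
  (forall a b, 0 <= a -> a <= b -> b <= T -> `|P b - P a| <= L * (b - a)) ->
  (forall a b, 0 <= a -> a <= b -> b <= T ->
     (forall s, a < s <= b -> 0 < u s) -> P a - P b <= K * (b - a)) ->
  (forall a b, 0 <= a -> a <= b -> b <= T ->
     (forall s, a < s <= b -> u s < 0) -> P b - P a <= K * (b - a)) ->
  forall t, 0 <= t <= T -> `|u t| <= 2 * V + K * t.
Proof.
move=> K0 L0 huv hv P0 hL hp hn t ht; rewrite ler_norml; apply/andP; split.
- rewrite lerNl.
  apply: (@scalar_up (fun s => - u s) (fun s => - v s) (fun s => - P s) T V K L) => //.
  + by move=> s hs; rewrite huv // opprB opprK addrC.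
  + by move=> s hs; rewrite normrN hv.
  + by rewrite P0 oppr0.
  + by move=> a b a0 ab bT; rewrite -opprD normrN hL.
  + move=> a b a0 ab bT h; rewrite opprK addrC; apply: hn => // s hs.
    by rewrite -oppr_gt0 h.
- exact: (@scalar_up u v P T V K L).
Qed.
End Scalar.

Lemma sum_rest_bound (R : realType) (n : nat) (F : 'I_n -> R) (k0 : 'I_n) (B : R) :
  0 <= B -> (forall k, k != k0 -> `|F k| <= B) ->
  `|\sum_(k < n | k != k0) F k| <= n%:R * B.
Proof.
move=> B0 hF; apply: le_trans (ler_norm_sum _ _ _) _.
apply: le_trans (_ : \sum_(k < n | k != k0) B <= _).
  by apply: ler_sum => k hk; apply: hF.
rewrite big_mkcond /=; apply: le_trans (_ : \sum_(k < n) B <= _).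
  by apply: ler_sum => k _; case: ifP.
by rewrite sumr_const card_ord mulr_natl.
Qed.

Section Main.
Variables (R : realType) (nI nJ : nat) (E : 'I_nI -> 'I_nJ -> bool)
  (mu : 'I_nI -> 'I_nJ -> R) (theta : 'I_nI -> R) (i0 : 'I_nI) (j0 : 'I_nJ).
Hypothesis hmuE : forall i j, E i j -> 0 < mu i j.
Hypothesis hmu0 : forall i j, ~~ E i j -> mu i j = 0.
Hypothesis hth : forall i, 0 <= theta i.
Hypothesis hE : E i0 j0.
Hypothesis hmt : theta i0 <= mu i0 j0.

Definition Mc := \sum_(i < nI) \sum_(j < nJ) mu i j + \sum_(i < nI) theta i + 1.
Definition Nr : R := (nI + nJ)%:R.
Definition Cc := 2 * Mc * Nr + Nr + 2.

Lemma mu_ge0 i j : 0 <= mu i j.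
Proof. by case: (boolP (E i j)) => h; [exact: ltW (hmuE i j h)|rewrite hmu0]. Qed.

Lemma sum_mu_ge0 i : 0 <= \sum_(j < nJ) mu i j.
Proof. by apply: sumr_ge0 => j _; exact: mu_ge0. Qed.

Lemma sum_theta_ge0 : 0 <= \sum_(i < nI) theta i.
Proof. by apply: sumr_ge0 => i _; exact: hth. Qed.

Lemma sum_mu_le i : \sum_(j < nJ) mu i j <= Mc.
Proof.
rewrite /Mc; have := sum_theta_ge0.
have : \sum_(j < nJ) mu i j <= \sum_(i < nI) \sum_(j < nJ) mu i j.
  rewrite (bigD1 i) //= lerDl; apply: sumr_ge0 => k _; exact: sum_mu_ge0.
lra.
Qed.

Lemma theta_le i : theta i <= Mc.
Proof.
rewrite /Mc.
have : theta i <= \sum_(i < nI) theta i.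
  by rewrite (bigD1 i) //= lerDl; apply: sumr_ge0 => k _; exact: hth.
have : 0 <= \sum_(i < nI) \sum_(j < nJ) mu i j.
  by apply: sumr_ge0 => k _; exact: sum_mu_ge0.
lra.
Qed.

Lemma Mc_ge1 : 1 <= Mc.
Proof.
rewrite /Mc; have := sum_theta_ge0.
have : 0 <= \sum_(i < nI) \sum_(j < nJ) mu i j.
  by apply: sumr_ge0 => k _; exact: sum_mu_ge0.
lra.
Qed.

Lemma nI_le : (nI%:R : R) <= Nr.
Proof. by rewrite /Nr ler_nat leq_addr. Qed.

Lemma nJ_le : (nJ%:R : R) <= Nr.
Proof. by rewrite /Nr ler_nat leq_addl. Qed.

Lemma Nr_ge1 : 1 <= Nr.
Proof.
apply: le_trans nI_le; rewrite ler1n; exact: (leq_ltn_trans (leq0n i0) (ltn_ord i0)).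
Qed.

Lemma Cc_ge1 : 1 <= Cc.
Proof.
rewrite /Cc; have := Mc_ge1; have := Nr_ge1 => h1 h2.
have : 0 <= Mc * Nr by apply: mulr_ge0; lra.
rewrite -mulrA; nra.
Qed.

Variables (w x : 'I_nI -> R -> R) (psi : 'I_nI -> 'I_nJ -> R -> R).
Definition yf (i : 'I_nI) (t : R) :=
  if i == i0 then pos_part (\sum_(k < nI) x k t) else 0.
Definition zf (j : 'I_nJ) (t : R) :=
  if j == j0 then neg_part (\sum_(k < nI) x k t) else 0.
Hypothesis mx : forall i, measurable_fun (@nonneg_half R) (x i).
Hypothesis mpsi : forall i j, measurable_fun (@nonneg_half R) (psi i j).
Hypothesis hnon : forall i j s, ~~ E i j -> 0 <= s -> psi i j s = 0.
Hypothesis hxe : forall i t, 0 <= t ->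
  x i t = w i t - \sum_(j < nJ) mu i j * integ0 (psi i j) t - theta i * integ0 (yf i) t.
Hypothesis hsi : forall i t, 0 <= t -> \sum_(j < nJ) psi i j t = x i t - yf i t.
Hypothesis hsj : forall j t, 0 <= t -> \sum_(i < nI) psi i j t = - zf j t.
Variables (T W L0 : R).
Hypothesis T0 : 0 <= T.
Hypothesis W0 : 0 <= W.
Hypothesis L00 : 0 <= L0.
Hypothesis hW : forall i s, 0 <= s <= T -> `|w i s| <= W.
Hypothesis hLx : forall i s, 0 <= s <= T -> `|x i s| <= L0.
Hypothesis hLp : forall i j s, 0 <= s <= T -> `|psi i j s| <= L0.

Definition Dc := Cc * (1 + T).

Lemma Dc_ge1 : 1 <= Dc.
Proof.
rewrite /Dc; have := Cc_ge1; move: T0 => h0 h1.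
have : Cc <= Cc * (1 + T) by rewrite ler_peMr ?lerDl //; lra.
lra.
Qed.

Lemma my i : measurable_fun (@nonneg_half R) (yf i).
Proof.
rewrite /yf; case: eqP => _; last exact: measurable_cst.
rewrite /pos_part.
apply: (measurable_realfun.measurable_maxr (f := fun t => \sum_(k < nI) x k t) (g := cst 0)).
- by apply: measurable_sum => k; exact: mx.
- exact: measurable_cst.
Qed.

Lemma yf_bd i s : 0 <= s <= T -> `|yf i s| <= Nr * L0.
Proof.
move=> hs; rewrite /yf; case: eqP => _; last first.
  by rewrite normr0 mulr_ge0 // ?L00 //; apply: le_trans Nr_ge1.
rewrite /pos_part.
have h1 : `|\sum_(k < nI) x k s| <= nI%:R * L0.
  apply: le_trans (ler_norm_sum _ _ _) _.
  apply: le_trans (_ : \sum_(k < nI) L0 <= _).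
    by apply: ler_sum => k _; exact: hLx.
  by rewrite sumr_const card_ord mulr_natl.
have h2 : nI%:R * L0 <= Nr * L0 by rewrite ler_wpM2r // nI_le.
apply: le_trans _ h2; apply: le_trans _ h1.
case: (leP (\sum_(k < nI) x k s) 0) => h.
  by rewrite normr0 normr_ge0.
by [].
Qed.

Lemma integ0_0 (f : R -> R) : integ0 f 0 = 0.
Proof. by rewrite /integ0 set_itv1 Rintegral_set1. Qed.

Lemma dpsi_lo i j a b c : 0 <= a -> a <= b -> b <= T ->
  (forall s, a < s <= b -> c <= psi i j s) ->
  c * (b - a) <= integ0 (psi i j) b - integ0 (psi i j) a.
Proof.
move=> a0 ab bT hc; apply: (@integ_ge R (psi i j) L0) => // s /andP[s0 sb].
by apply: hLp; rewrite s0 (le_trans sb bT).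
Qed.

Lemma dpsi_hi i j a b c : 0 <= a -> a <= b -> b <= T ->
  (forall s, a < s <= b -> psi i j s <= c) ->
  integ0 (psi i j) b - integ0 (psi i j) a <= c * (b - a).
Proof.
move=> a0 ab bT hc; apply: (@integ_le R (psi i j) L0) => // s /andP[s0 sb].
by apply: hLp; rewrite s0 (le_trans sb bT).
Qed.

Lemma dpsi_abs i j a b K : 0 <= a -> a <= b -> b <= T ->
  (forall s, a < s <= b -> `|psi i j s| <= K) ->
  `|integ0 (psi i j) b - integ0 (psi i j) a| <= K * (b - a).
Proof.
move=> a0 ab bT hK; rewrite ler_norml; apply/andP; split.
- rewrite -mulNr; apply: dpsi_lo => // s hs.
  by have := hK s hs; rewrite ler_norml => /andP[].
- apply: dpsi_hi => // s hs.
  by have := hK s hs; rewrite ler_norml => /andP[].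
Qed.

Lemma dy_abs i a b : 0 <= a -> a <= b -> b <= T ->
  `|integ0 (yf i) b - integ0 (yf i) a| <= (Nr * L0) * (b - a).
Proof.
move=> a0 ab bT; rewrite ler_norml; apply/andP; split.
- rewrite -mulNr; apply: (@integ_ge R (yf i) (Nr * L0)) => //.
  + exact: my.
  + by move=> s /andP[s0 sb]; apply: yf_bd; rewrite s0 (le_trans sb bT).
  + move=> s /andP[hs1 sb]; have : `|yf i s| <= Nr * L0.
      by apply: yf_bd; rewrite (le_trans a0 (ltW hs1)) (le_trans sb bT).
    by rewrite ler_norml => /andP[].
- apply: (@integ_le R (yf i) (Nr * L0)) => //.
  + exact: my.
  + by move=> s /andP[s0 sb]; apply: yf_bd; rewrite s0 (le_trans sb bT).
  + move=> s /andP[hs1 sb]; have : `|yf i s| <= Nr * L0.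
      by apply: yf_bd; rewrite (le_trans a0 (ltW hs1)) (le_trans sb bT).
    by rewrite ler_norml => /andP[].
Qed.

Definition Pf i s := \sum_(j < nJ) mu i j * integ0 (psi i j) s + theta i * integ0 (yf i) s.

Lemma xP i s : 0 <= s -> x i s = w i s - Pf i s.
Proof. by move=> s0; rewrite hxe // /Pf opprD addrA. Qed.

Lemma Pf0 i : Pf i 0 = 0.
Proof.
rewrite /Pf integ0_0 mulr0 addr0 big1 // => j _; by rewrite integ0_0 mulr0.
Qed.

Lemma dPf i a b : Pf i b - Pf i a =
  \sum_(j < nJ) mu i j * (integ0 (psi i j) b - integ0 (psi i j) a)
  + theta i * (integ0 (yf i) b - integ0 (yf i) a).
Proof.
have -> : \sum_(j < nJ) mu i j * (integ0 (psi i j) b - integ0 (psi i j) a) =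
  \sum_(j < nJ) mu i j * integ0 (psi i j) b - \sum_(j < nJ) mu i j * integ0 (psi i j) a.
  by rewrite -sumrB; apply: eq_bigr => j _; rewrite mulrBr.
rewrite /Pf mulrBr.
set s1 := \sum_(j < nJ) _; set s2 := \sum_(j < nJ) _.
set t1 := theta i * _; set t2 := theta i * _.
lra.
Qed.

Definition Lp := 2 * Mc * Nr * L0.

Lemma Pf_lip i a b : 0 <= a -> a <= b -> b <= T ->
  `|Pf i b - Pf i a| <= Lp * (b - a).
Proof.
move=> a0 ab bT; rewrite dPf.
have ba : 0 <= b - a by rewrite subr_ge0.
have h1 : `|\sum_(j < nJ) mu i j * (integ0 (psi i j) b - integ0 (psi i j) a)|
    <= Mc * L0 * (b - a).
  apply: le_trans (ler_norm_sum _ _ _) _.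
  apply: le_trans (_ : \sum_(j < nJ) mu i j * (L0 * (b - a)) <= _).
    apply: ler_sum => j _; rewrite normrM ger0_norm ?mu_ge0 //.
    by apply: ler_wpM2l; [exact: mu_ge0|apply: dpsi_abs => // s hs; apply: hLp; case/andP: hs => h1 h2; apply/andP; split; [exact: le_trans a0 (ltW h1)|exact: le_trans h2 bT]].
  rewrite -mulr_suml -mulrA; apply: ler_wpM2r; first by rewrite mulr_ge0.
  exact: sum_mu_le.
have h2 : `|theta i * (integ0 (yf i) b - integ0 (yf i) a)| <= Mc * (Nr * L0) * (b - a).
  rewrite normrM ger0_norm ?hth // -mulrA; apply: ler_pM => //.
  - exact: theta_le.
  - exact: dy_abs.
apply: le_trans (ler_normD _ _) _.
have : Mc * L0 * (b - a) <= Mc * (Nr * L0) * (b - a).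
  apply: ler_wpM2r => //; apply: ler_wpM2l; first by apply: le_trans Mc_ge1.
  by rewrite ler_peMl // Nr_ge1.
rewrite /Lp.
have -> : 2 * Mc * Nr * L0 * (b - a) = Mc * (Nr * L0) * (b - a) + Mc * (Nr * L0) * (b - a).
  by rewrite !mulrA; ring.
move: h1 h2; set p := `|_|; set q := `|_|; set r := Mc * L0 * (b - a).
set r2 := Mc * (Nr * L0) * (b - a); lra.
Qed.

Lemma Nr_le_Dc : Nr <= Dc.
Proof.
rewrite /Dc /Cc; have := Mc_ge1; have := Nr_ge1; move: T0 => h0 h1 h2.
have : 0 <= Mc * Nr by apply: mulr_ge0; lra.
move=> h3; nra.
Qed.

Definition Inv (act : {set ('I_nI + 'I_nJ)%type}) (B : R) :=
  (forall i, inl i \notin act -> forall s, 0 <= s <= T -> `|x i s| <= B) /\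
  (forall i j, (inl i \notin act) || (inr j \notin act) ->
     forall s, 0 <= s <= T -> `|psi i j s| <= B).

Lemma stepJ (act : {set ('I_nI + 'I_nJ)%type}) (B : R) (j : 'I_nJ) : 0 <= B -> inr j \in act -> j != j0 ->
  (forall a b, a \in act -> b \in act ->
     bip_adj E (inr j) a -> bip_adj E (inr j) b -> a = b) ->
  Inv act B -> Inv (act :\ inr j) (Dc * B).
Proof.
move=> B0 ja jne U [Ix Ip].
have BD : B <= Dc * B by rewrite ler_peMl // Dc_ge1.
have DB0 : 0 <= Dc * B by apply: le_trans BD.
have NB : nI%:R * B <= Dc * B.
  by rewrite ler_wpM2r //; apply: le_trans nI_le Nr_le_Dc.
split.
- move=> i hi s hs; apply: le_trans BD; apply: Ix hs.
  by move: hi; rewrite !inE negb_and negbK => /orP[/eqP //|].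
- move=> i j' h s hs; case: (eqVneq j' j) => [->|jj].
  + have s0 : 0 <= s by case/andP: hs.
    case: (boolP (E i j)) => Eij; last by rewrite hnon // normr0.
    case: (boolP (inl i \in act)) => ai; last first.
      by apply: le_trans BD; apply: Ip hs; rewrite ai.
    have sumj := hsj j s s0.
    rewrite /zf (negbTE jne) oppr0 (bigD1 i) //= in sumj.
    have -> : psi i j s = - \sum_(k < nI | k != i) psi k j s.
      by move: sumj; set S := \sum_(_ < nI | _) _; move=> sumj; apply/eqP; rewrite -addr_eq0 sumj.
    rewrite normrN; apply: le_trans NB; apply: sum_rest_bound => // k kne.
    case: (boolP (inl k \in act)) => ak; last by apply: Ip hs; rewrite ak.
    have Ekj : ~~ E k j.
      apply/negP => Ekj; have := U (inl i) (inl k) ai ak Eij Ekj.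
      by case=> hk; move: kne; rewrite hk eqxx.
    by rewrite hnon // normr0.
  + apply: le_trans BD; apply: Ip hs.
    move: h; rewrite !inE !negb_and !negbK /= => /or3P[-> //|/eqP[] ej|-> //]; last by rewrite orbT.
    by move: jj; rewrite ej eqxx.
Qed.

Definition Kc (B : R) := 2 * Mc * Nr * B.

Lemma Kc_ge0 B : 0 <= B -> 0 <= Kc B.
Proof.
move=> B0; rewrite /Kc; have := Mc_ge1; have := Nr_ge1 => h1 h2.
by apply: mulr_ge0 => //; apply: mulr_ge0 => //; apply: mulr_ge0; lra.
Qed.

Lemma bound_fin B s : 0 <= B -> W <= B -> 0 <= s <= T ->
  2 * W + Kc B * s + Nr * B <= Dc * B.
Proof.
move=> B0 WB /andP[s0 sT]; rewrite /Kc /Dc /Cc.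
have := Mc_ge1; have := Nr_ge1 => h1 h2.
have h3 : 0 <= Mc * Nr * B by apply: mulr_ge0 => //; apply: mulr_ge0; lra.
have h4 : Mc * Nr * B * s <= Mc * Nr * B * T by apply: ler_wpM2l.
have h5 : 0 <= (Nr + 2) * T * B by apply: mulr_ge0 => //; apply: mulr_ge0 => //; lra.
have -> : 2 * Mc * Nr * B * s = 2 * (Mc * Nr * B * s) by ring.
have -> : (2 * Mc * Nr + Nr + 2) * (1 + T) * B =
  2 * (Mc * Nr * B) + Nr * B + 2 * B + 2 * (Mc * Nr * B * T) + (Nr + 2) * T * B by ring.
lra.
Qed.

Lemma stepI (act : {set ('I_nI + 'I_nJ)%type}) (B : R) (k : 'I_nI) :
  0 <= B -> W <= B -> inl k \in act -> k != i0 ->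
  (forall a b, a \in act -> b \in act ->
     bip_adj E (inl k) a -> bip_adj E (inl k) b -> a = b) ->
  Inv act B -> Inv (act :\ inl k) (Dc * B).
Proof.
move=> B0 WB ka kne U [Ix Ip].
have BD : B <= Dc * B by rewrite ler_peMl // Dc_ge1.
have DB0 : 0 <= Dc * B by apply: le_trans BD.
have NB0 : 0 <= Nr * B by apply: mulr_ge0 => //; apply: le_trans Nr_ge1.
have yk : yf k = fun _ => 0 by apply: funext => t; rewrite /yf (negbTE kne).
have nb : forall j s, 0 <= s <= T -> inr j \in act -> E k j ->
    `|psi k j s - x k s| <= Nr * B.
  move=> j s hs ja Ekj; have s0 : 0 <= s by case/andP: hs.
  have := hsi k s s0; rewrite yk subr0 (bigD1 j) //=.
  set S := \sum_(_ < nJ | _) _ => hh.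
  have -> : psi k j s - x k s = - S by rewrite -hh opprD addrA subrr add0r.
  rewrite normrN; apply: le_trans (_ : nJ%:R * B <= _); last by rewrite ler_wpM2r // nJ_le.
  apply: sum_rest_bound => // j' jne'.
  case: (boolP (inr j' \in act)) => ja'; last by apply: Ip hs; rewrite ja' orbT.
  have nE : ~~ E k j'.
    apply/negP => E'; have := U (inr j) (inr j') ja ja' Ekj E'.
    by case=> hj; move: jne'; rewrite hj eqxx.
  by rewrite hnon // normr0.
have inact : forall j s, 0 <= s <= T -> inr j \notin act -> `|psi k j s| <= B.
  by move=> j s hs ja; apply: Ip hs; rewrite ja orbT.
have sub_ab : forall a b s, 0 <= a -> b <= T -> a < s <= b -> 0 <= s <= T.
  move=> a b s a0 bT /andP[h1 h2]; apply/andP; split.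
  - exact: le_trans a0 (ltW h1).
  - exact: le_trans h2 bT.
have term_lo : forall j a b, 0 <= a -> a <= b -> b <= T ->
    (forall s, a < s <= b -> 0 < x k s) ->
    - (mu k j * (Nr * B)) * (b - a) <=
    mu k j * (integ0 (psi k j) b - integ0 (psi k j) a).
  move=> j a b a0 ab bT hpos.
  case: (boolP (E k j)) => Ekj; last by rewrite hmu0 // !mul0r oppr0 mul0r.
  have -> : - (mu k j * (Nr * B)) * (b - a) = mu k j * (- (Nr * B) * (b - a)) by ring.
  apply: ler_wpM2l; first exact: mu_ge0.
  case: (boolP (inr j \in act)) => ja.
  - apply: dpsi_lo => // s hs; have := nb j s (sub_ab a b s a0 bT hs) ja Ekj.
    rewrite ler_norml => /andP[h1 _]; have := hpos s hs; lra.
  - have := @dpsi_abs k j a b B a0 ab bT (fun s hs => inact j s (sub_ab a b s a0 bT hs) ja).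
    rewrite ler_norml => /andP[h1 _]; apply: le_trans h1.
    rewrite !mulNr lerN2; apply: ler_wpM2r; first by rewrite subr_ge0.
    by rewrite ler_peMl // Nr_ge1.
have term_hi : forall j a b, 0 <= a -> a <= b -> b <= T ->
    (forall s, a < s <= b -> x k s < 0) ->
    mu k j * (integ0 (psi k j) b - integ0 (psi k j) a) <=
    (mu k j * (Nr * B)) * (b - a).
  move=> j a b a0 ab bT hneg.
  case: (boolP (E k j)) => Ekj; last by rewrite hmu0 // !mul0r.
  rewrite -mulrA; apply: ler_wpM2l; first exact: mu_ge0.
  case: (boolP (inr j \in act)) => ja.
  - apply: dpsi_hi => // s hs; have := nb j s (sub_ab a b s a0 bT hs) ja Ekj.
    rewrite ler_norml => /andP[_ h1]; have := hneg s hs; lra.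
  - have := @dpsi_abs k j a b B a0 ab bT (fun s hs => inact j s (sub_ab a b s a0 bT hs) ja).
    rewrite ler_norml => /andP[_ h1]; apply: le_trans h1 _.
    apply: ler_wpM2r; first by rewrite subr_ge0.
    by rewrite ler_peMl // Nr_ge1.
have dPk : forall a b, Pf k b - Pf k a =
    \sum_(j < nJ) mu k j * (integ0 (psi k j) b - integ0 (psi k j) a).
  by move=> a b; rewrite dPf yk !integ_zero subrr mulr0 addr0.
have sum_id : forall a b : R,
    \sum_(j < nJ) (mu k j * (Nr * B)) * (b - a) = (\sum_(j < nJ) mu k j) * (Nr * B) * (b - a).
  by move=> a b; rewrite -!mulr_suml.
have Mab : forall a b : R, a <= b ->
    (\sum_(j < nJ) mu k j) * (Nr * B) * (b - a) <= Kc B * (b - a).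
  move=> a b ab; apply: ler_wpM2r; first by rewrite subr_ge0.
  rewrite /Kc -!mulrA; apply: le_trans (_ : Mc * (Nr * B) <= _).
    by apply: ler_wpM2r => //; exact: sum_mu_le.
  rewrite ler_peMl //; first by apply: mulr_ge0 => //; apply: le_trans Mc_ge1.
  have := Mc_ge1; lra.
have hxk : forall s, 0 <= s <= T -> `|x k s| <= 2 * W + Kc B * s.
  apply: (@scalar_abs R (x k) (w k) (Pf k) T W (Kc B) Lp).
  - exact: Kc_ge0.
  - rewrite /Lp; have := Mc_ge1; have := Nr_ge1 => h1 h2.
    by apply: mulr_ge0 => //; apply: mulr_ge0 => //; apply: mulr_ge0; lra.
  - by move=> s /andP[s0 _]; exact: xP.
  - exact: hW.
  - exact: Pf0.
  - by move=> a b a0 ab bT; exact: Pf_lip.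
  - move=> a b a0 ab bT hpos; rewrite -opprB dPk lerNl.
    apply: le_trans (_ : - ((\sum_(j < nJ) mu k j) * (Nr * B) * (b - a)) <= _).
      by rewrite lerN2; apply: Mab.
    rewrite -sum_id -sumrN; apply: ler_sum => j _.
    by rewrite -mulNr; apply: term_lo.
  - move=> a b a0 ab bT hneg; rewrite dPk.
    apply: le_trans (Mab a b ab); rewrite -sum_id; apply: ler_sum => j _.
    exact: term_hi.
have hxk2 : forall s, 0 <= s <= T -> `|x k s| + Nr * B <= Dc * B.
  move=> s hs; apply: le_trans (@bound_fin B s B0 WB hs).
  by rewrite lerD2r; exact: hxk.
split.
- move=> i hi s hs; case: (eqVneq i k) => [->|ik].
  + by apply: le_trans (hxk2 s hs); rewrite lerDl.
  + apply: le_trans BD; apply: Ix hs.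
    move: hi; rewrite !inE negb_and negbK /= => /orP[/eqP[] ei|//].
    by move: ik; rewrite ei eqxx.
- move=> i j h s hs; case: (eqVneq i k) => [->|ik].
  + case: (boolP (inr j \in act)) => ja; last by apply: le_trans BD; exact: inact.
    case: (boolP (E k j)) => Ekj; last by rewrite hnon //; [rewrite normr0 | case/andP: hs].
    apply: le_trans (hxk2 s hs).
    have -> : psi k j s = (psi k j s - x k s) + x k s by rewrite subrK.
    apply: le_trans (ler_normD _ _) _; rewrite addrC lerD2l.
    exact: nb.
  + apply: le_trans BD; apply: Ip hs.
    move: h; rewrite !inE !negb_and !negbK /=.
    case/orP => [/orP[/eqP[] ei| -> //]| ->]; last by rewrite orbT.
    by move: ik; rewrite ei eqxx.
Qed.

Lemma base (B : R) : 0 <= B -> W <= B -> Inv [set inl i0; inr j0]%SET B ->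
  forall s, 0 <= s <= T -> `|x i0 s| <= Dc * B.
Proof.
move=> B0 WB [Ix Ip].
have iin : forall i, i != i0 -> inl i \notin [set inl i0; inr j0]%SET.
  move=> i ine; rewrite !inE negb_or; apply/andP; split; apply/eqP; case=> //.
  by move=> ei; move: ine; rewrite ei eqxx.
have jin : forall j, j != j0 -> inr j \notin [set inl i0; inr j0]%SET.
  move=> j jne; rewrite !inE negb_or; apply/andP; split; apply/eqP; case=> //.
  by move=> ej; move: jne; rewrite ej eqxx.
have hr : forall s, 0 <= s <= T ->
    `|\sum_(j < nJ | j != j0) psi i0 j s| <= nJ%:R * B.
  move=> s hs; apply: sum_rest_bound => // j jne; apply: Ip hs.
  by rewrite jin // orbT.
have hc : forall s, 0 <= s <= T ->
    `|\sum_(k < nI | k != i0) x k s| <= nI%:R * B.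
  by move=> s hs; apply: sum_rest_bound => // k kne; apply: Ix hs; rewrite iin.
have NrE : Nr = nI%:R + nJ%:R by rewrite /Nr natrD.
have mu0M : mu i0 j0 <= Mc.
  apply: le_trans (sum_mu_le i0); rewrite (bigD1 j0) //= lerDl.
  by apply: sumr_ge0 => j _; exact: mu_ge0.
have mu00 : 0 <= mu i0 j0 := mu_ge0 i0 j0.
have th0 := hth i0.
pose h := fun s => mu i0 j0 * psi i0 j0 s + theta i0 * yf i0 s.
have hdecomp : forall s, 0 <= s <= T ->
    [/\ h s = mu i0 j0 * (x i0 s - yf i0 s - \sum_(j < nJ | j != j0) psi i0 j s)
              + theta i0 * yf i0 s,
        0 <= yf i0 s, x i0 s + \sum_(k < nI | k != i0) x k s <= yf i0 s &
        yf i0 s <= Num.max (x i0 s + \sum_(k < nI | k != i0) x k s) 0].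
  move=> s hs; have s0 : 0 <= s by case/andP: hs.
  have hy : yf i0 s = Num.max (x i0 s + \sum_(k < nI | k != i0) x k s) 0.
    by rewrite /yf eqxx /pos_part (bigD1 i0).
  split.
  - rewrite /h; congr (_ * _ + _).
    have := hsi i0 s s0; rewrite (bigD1 j0) //= => hh.
    by rewrite -hh addrK.
  - by rewrite hy le_max lexx orbT.
  - by rewrite hy le_max lexx.
  - by rewrite hy.
have hpt_lo : forall s, 0 <= s <= T -> 0 < x i0 s -> - (Mc * Nr * B) <= h s.
  move=> s hs xp; have [-> y0 y1 y2] := hdecomp s hs.
  have := hr s hs; have := hc s hs.
  set X := x i0 s; set Y := yf i0 s; set r := \sum_(j < nJ | _) _.
  set c := \sum_(k < nI | _) _ => hc' hr'.
  have yle : Y <= X + `|c|.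
    apply: le_trans y2 _; rewrite ge_max; apply/andP; split.
    - by rewrite lerD2l ler_norm.
    - by apply: addr_ge0; [exact: ltW|exact: normr_ge0].
  have p1 : (mu i0 j0 - theta i0) * Y <= (mu i0 j0 - theta i0) * (X + `|c|).
    by apply: ler_wpM2l; rewrite ?subr_ge0.
  have p2 : 0 <= theta i0 * X by apply: mulr_ge0 => //; exact: ltW.
  have p3 : 0 <= theta i0 * `|c| by apply: mulr_ge0.
  have p4 : mu i0 j0 * r <= mu i0 j0 * `|r| by apply: ler_wpM2l => //; exact: ler_norm.
  have p5 : mu i0 j0 * (`|c| + `|r|) <= mu i0 j0 * (Nr * B).
    by apply: ler_wpM2l => //; rewrite NrE mulrDl; apply: lerD.
  have NB0 : 0 <= Nr * B by apply: mulr_ge0 => //; apply: le_trans Nr_ge1.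
  have p6 : mu i0 j0 * (Nr * B) <= Mc * (Nr * B) by apply: ler_wpM2r.
  have -> : - (Mc * Nr * B) = - (Mc * (Nr * B)) by rewrite mulrA.
  move: p1 p2 p3 p4 p5 p6; set m := mu i0 j0; set th := theta i0.
  set ac := `|c|; set ar := `|r|; set MN := Mc * (Nr * B).
  move=> p1 p2 p3 p4 p5 p6; nra.
have hpt_hi : forall s, 0 <= s <= T -> x i0 s < 0 -> h s <= Mc * Nr * B.
  move=> s hs xn; have [-> y0 y1 y2] := hdecomp s hs.
  have := hr s hs.
  set X := x i0 s; set Y := yf i0 s; set r := \sum_(j < nJ | _) _ => hr'.
  have q1 : 0 <= (mu i0 j0 - theta i0) * Y by apply: mulr_ge0; rewrite ?subr_ge0.
  have q2 : mu i0 j0 * X <= 0 by apply: mulr_ge0_le0 => //; exact: ltW.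
  have q3 : mu i0 j0 * (- r) <= mu i0 j0 * `|r|.
    by apply: ler_wpM2l => //; rewrite -normrN ler_norm.
  have q4 : mu i0 j0 * `|r| <= mu i0 j0 * (Nr * B).
    apply: ler_wpM2l => //; apply: le_trans hr' _; apply: ler_wpM2r => //.
    exact: nJ_le.
  have NB0 : 0 <= Nr * B by apply: mulr_ge0 => //; apply: le_trans Nr_ge1.
  have q5 : mu i0 j0 * (Nr * B) <= Mc * (Nr * B) by apply: ler_wpM2r.
  have -> : Mc * Nr * B = Mc * (Nr * B) by rewrite mulrA.
  move: q1 q2 q3 q4 q5; set m := mu i0 j0; set th := theta i0.
  set ar := `|r|; set MN := Mc * (Nr * B).
  move=> q1 q2 q3 q4 q5; nra.
have Mc0 : 0 <= Mc by apply: le_trans Mc_ge1.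
have Nr1 := Nr_ge1.
have mh : measurable_fun (@nonneg_half R) h.
  apply: (measurable_realfun.measurable_funD (f := fun s => mu i0 j0 * psi i0 j0 s)
     (g := fun s => theta i0 * yf i0 s)).
  - exact: (measurable_realfun.measurable_funM (measurable_cst (mu i0 j0)) (mpsi i0 j0)).
  - exact: (measurable_realfun.measurable_funM (measurable_cst (theta i0)) (my i0)).
have bpsi : forall s, 0 <= s <= T -> `|mu i0 j0 * psi i0 j0 s| <= Lp.
  move=> s hs; rewrite normrM ger0_norm // /Lp.
  apply: le_trans (_ : Mc * L0 <= _).
    by apply: ler_pM => //; exact: hLp.
  have := mulr_ge0 Mc0 L00; nra.
have byf : forall s, 0 <= s <= T -> `|theta i0 * yf i0 s| <= Lp.
  move=> s hs; rewrite normrM ger0_norm // /Lp.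
  apply: le_trans (_ : Mc * (Nr * L0) <= _).
    by apply: ler_pM => //; [exact: theta_le|exact: yf_bd].
  have := mulr_ge0 (mulr_ge0 Mc0 (le_trans ler01 Nr1)) L00; nra.
have bh : forall s, 0 <= s <= T -> `|h s| <= Lp + Lp.
  by move=> s hs; apply: le_trans (ler_normD _ _) _; apply: lerD; [exact: bpsi|exact: byf].
have hlin : forall t, 0 <= t <= T ->
    integ0 h t = mu i0 j0 * integ0 (psi i0 j0) t + theta i0 * integ0 (yf i0) t.
  move=> t /andP[t0 tT].
  have sub : forall s, 0 <= s <= t -> 0 <= s <= T.
    by move=> s /andP[-> st]; exact: le_trans st tT.
  rewrite /h (@integ_add R (fun s => mu i0 j0 * psi i0 j0 s) (fun s => theta i0 * yf i0 s) Lp t).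
  - rewrite (@integ_scale R (psi i0 j0) L0 t) //; last by move=> s /sub; exact: hLp.
    rewrite (@integ_scale R (yf i0) (Nr * L0) t) //; first exact: my.
    by move=> s /sub; exact: yf_bd.
  - exact: (measurable_realfun.measurable_funM (measurable_cst (mu i0 j0)) (mpsi i0 j0)).
  - exact: (measurable_realfun.measurable_funM (measurable_cst (theta i0)) (my i0)).
  - by move=> s /sub; exact: bpsi.
  - by move=> s /sub; exact: byf.
have dP : forall a b, 0 <= a <= T -> 0 <= b <= T ->
    Pf i0 b - Pf i0 a = (integ0 h b - integ0 h a) +
      \sum_(j < nJ | j != j0) mu i0 j * (integ0 (psi i0 j) b - integ0 (psi i0 j) a).
  move=> a b ha hb; rewrite dPf (bigD1 j0) //= (hlin a ha) (hlin b hb).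
  set S := \sum_(j < nJ | _) _.
  set p1 := integ0 (psi i0 j0) b; set p2 := integ0 (psi i0 j0) a.
  set y1 := integ0 (yf i0) b; set y2 := integ0 (yf i0) a.
  ring.
have hrest : forall a b, 0 <= a -> a <= b -> b <= T ->
    `|\sum_(j < nJ | j != j0) mu i0 j * (integ0 (psi i0 j) b - integ0 (psi i0 j) a)|
      <= Mc * Nr * B * (b - a).
  move=> a b a0 ab bT.
  have ba : 0 <= b - a by rewrite subr_ge0.
  apply: le_trans (ler_norm_sum _ _ _) _.
  apply: le_trans (_ : \sum_(j < nJ | j != j0) mu i0 j * (B * (b - a)) <= _).
    apply: ler_sum => j jne; rewrite normrM ger0_norm ?mu_ge0 //.
    apply: ler_wpM2l; first exact: mu_ge0.
    apply: dpsi_abs => // s /andP[h1 h2]; apply: Ip; first by rewrite jin // orbT.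
    by rewrite (le_trans a0 (ltW h1)) (le_trans h2 bT).
  apply: le_trans (_ : \sum_(j < nJ) mu i0 j * (B * (b - a)) <= _).
    rewrite [X in _ <= X](bigD1 j0) //= lerDr; apply: mulr_ge0; first exact: mu_ge0.
    exact: mulr_ge0.
  rewrite -mulr_suml -!mulrA; apply: ler_pM => //.
  - exact: sum_mu_ge0.
  - exact: mulr_ge0.
  - exact: sum_mu_le.
  - by rewrite ler_peMl //; exact: mulr_ge0.
have hxk : forall s, 0 <= s <= T -> `|x i0 s| <= 2 * W + Kc B * s.
  apply: (@scalar_abs R (x i0) (w i0) (Pf i0) T W (Kc B) Lp).
  - exact: Kc_ge0.
  - rewrite /Lp; apply: mulr_ge0 => //; apply: mulr_ge0 => //; apply: mulr_ge0; lra.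
  - by move=> s /andP[s0 _]; exact: xP.
  - exact: hW.
  - exact: Pf0.
  - by move=> a b a0 ab bT; exact: Pf_lip.
  - move=> a b a0 ab bT hpos.
    have ha : 0 <= a <= T by rewrite a0 (le_trans ab bT).
    have hb : 0 <= b <= T by rewrite (le_trans a0 ab) bT.
    rewrite -opprB (dP a b ha hb).
    have h1 : - (Mc * Nr * B) * (b - a) <= integ0 h b - integ0 h a.
      apply: (@integ_ge R h (Lp + Lp)) => //.
      + by move=> s /andP[s0 sb]; apply: bh; rewrite s0 (le_trans sb bT).
      + move=> s hs; apply: hpt_lo; last exact: hpos.
        by case/andP: hs => hs1 hs2; rewrite (le_trans a0 (ltW hs1)) (le_trans hs2 bT).
    have := hrest a b a0 ab bT; rewrite ler_norml => /andP[h2 _].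
    move: h1 h2; rewrite /Kc; set D1 := integ0 h b - integ0 h a; set S := \sum_(j < nJ | _) _.
    set MN := Mc * Nr * B; have -> : 2 * Mc * Nr * B = 2 * MN by rewrite /MN !mulrA.
    move=> h1 h2; nra.
  - move=> a b a0 ab bT hneg.
    have ha : 0 <= a <= T by rewrite a0 (le_trans ab bT).
    have hb : 0 <= b <= T by rewrite (le_trans a0 ab) bT.
    rewrite (dP a b ha hb).
    have h1 : integ0 h b - integ0 h a <= (Mc * Nr * B) * (b - a).
      apply: (@integ_le R h (Lp + Lp)) => //.
      + by move=> s /andP[s0 sb]; apply: bh; rewrite s0 (le_trans sb bT).
      + move=> s hs; apply: hpt_hi; last exact: hneg.
        by case/andP: hs => hs1 hs2; rewrite (le_trans a0 (ltW hs1)) (le_trans hs2 bT).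
    have := hrest a b a0 ab bT; rewrite ler_norml => /andP[_ h2].
    move: h1 h2; rewrite /Kc; set D1 := integ0 h b - integ0 h a; set S := \sum_(j < nJ | _) _.
    set MN := Mc * Nr * B; have -> : 2 * Mc * Nr * B = 2 * MN by rewrite /MN !mulrA.
    move=> h1 h2; nra.
move=> s hs; apply: le_trans (hxk s hs) _.
have := @bound_fin B s B0 WB hs.
have : 0 <= Nr * B by apply: mulr_ge0 => //; lra.
lra.
Qed.

Lemma bip_sym : symmetric (bip_adj E).
Proof. by move=> [a|a] [b|b]. Qed.

Lemma bip_irr : irreflexive (bip_adj E).
Proof. by move=> [a|a]. Qed.

Lemma main_ind
  (acyc : forall p : seq ('I_nI + 'I_nJ)%type, uniq p -> (2 < size p)%N -> ~~ cycle (bip_adj E) p)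
  (n : nat) : forall (act : {set ('I_nI + 'I_nJ)%type}) (B : R),
  (#|act| <= n)%N -> inl i0 \in act -> inr j0 \in act -> 0 <= B -> W <= B -> Inv act B ->
  forall i s, 0 <= s <= T -> `|x i s| <= Dc ^+ n * B.
Proof.
have D1 := Dc_ge1.
elim: n => [|n IH] act B hc ai aj B0 WB hI i s hs.
  by move: hc; rewrite (cardsD1 (inl i0)) ai.
have Dn : Dc <= Dc ^+ n.+1.
  rewrite exprS ler_peMr //; first lra.
  exact: exprn_ege1.
have DB : Dc * B <= Dc ^+ n.+1 * B by rewrite ler_wpM2r.
have BD : B <= Dc * B by rewrite ler_peMl.
have e12 : bip_adj E (inl i0) (inr j0) by [].
have := peel bip_sym bip_irr acyc ai aj e12.
case => [actE | [v [va v1 v2 U]]].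
  move: hI; rewrite actE => hI.
  case: (eqVneq i i0) => [->|ine].
    by apply: le_trans (@base B B0 WB hI s hs) DB.
  apply: le_trans DB; apply: le_trans BD; case: hI => Ix _; apply: Ix hs.
  rewrite !inE negb_or; apply/andP; split; apply/eqP; case=> //.
  by move=> ei; move: ine; rewrite ei eqxx.
have cnt : (#|act :\ v| <= n)%N.
  by move: hc; rewrite (cardsD1 v) va add1n ltnS.
have Dc0 : 0 <= Dc by lra.
have WDB : W <= Dc * B := le_trans WB BD.
have DB0 : 0 <= Dc * B := le_trans B0 BD.
rewrite exprSr -mulrA.
case: v va v1 v2 U cnt => [k|j] va v1 v2 U cnt.
- have kne : k != i0 by apply/eqP => ek; move: v1; rewrite ek eqxx.
  have hI' := @stepI act B k B0 WB va kne U hI.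
  apply: (IH (act :\ inl k) (Dc * B)) => //.
  + by rewrite !inE ai andbT eq_sym.
  + by rewrite !inE aj andbT.
- have jne : j != j0 by apply/eqP => ej; move: v2; rewrite ej eqxx.
  have hI' := @stepJ act B j B0 va jne U hI.
  apply: (IH (act :\ inr j) (Dc * B)) => //.
  + by rewrite !inE ai andbT.
  + by rewrite !inE aj andbT eq_sym.
Qed.
End Main.

Lemma fin_bound (R : realType) (I : finType) (F : I -> R -> R) (P : R -> Prop) :
  (forall i, exists M : R, forall s, P s -> `|F i s| <= M) ->
  exists M : R, 0 <= M /\ forall i s, P s -> `|F i s| <= M.
Proof.
move=> H; pose g i := projT1 (cid (H i)).
exists (\sum_i `|g i|); split; first by apply: sumr_ge0 => i _.
move=> i s Ps; apply: le_trans (projT2 (cid (H i)) s Ps) _.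
apply: le_trans (ler_norm _) _.
by rewrite (bigD1 i) //= lerDl; apply: sumr_ge0.
Qed.

Theorem proposition3 (R : realType) (nI nJ : nat)
  (E : 'I_nI -> 'I_nJ -> bool) (mu : 'I_nI -> 'I_nJ -> R) (theta : 'I_nI -> R)
  (i0 : 'I_nI) (j0 : 'I_nJ) :
  is_tree E ->
  (forall i j, E i j -> 0 < mu i j) ->
  (forall i j, ~~ E i j -> mu i j = 0) ->
  (forall i, 0 <= theta i) ->
  E i0 j0 -> theta i0 <= mu i0 j0 ->
  exists m7 : R,
  forall (w x : 'I_nI -> R -> R) (psi : 'I_nI -> 'I_nJ -> R -> R),
    let y := fun (i : 'I_nI) (t : R) =>
      if i == i0 then pos_part (\sum_(k < nI) x k t) else 0 in
    let z := fun (j : 'I_nJ) (t : R) =>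
      if j == j0 then neg_part (\sum_(k < nI) x k t) else 0 in
    (forall i, measurable_fun (@nonneg_half R) (w i) /\ loc_bounded (w i)) ->
    (forall i, measurable_fun (@nonneg_half R) (x i) /\ loc_bounded (x i)) ->
    (forall i j, measurable_fun (@nonneg_half R) (psi i j) /\ loc_bounded (psi i j)) ->
    (forall i j s, ~~ E i j -> 0 <= s -> psi i j s = 0) ->
    (forall i t, 0 <= t ->
       x i t = w i t - \sum_(j < nJ) mu i j * integ0 (psi i j) t
               - theta i * integ0 (y i) t) ->
    (forall i t, 0 <= t -> \sum_(j < nJ) psi i j t = x i t - y i t) ->
    (forall j t, 0 <= t -> \sum_(i < nI) psi i j t = - z j t) ->
    forall t : R, 0 <= t ->
      norm1 (fun i => x i t) <= m7 * powR (1 + t) m7 * supnorm w t.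
Proof.
move=> tree hmuE hmu0 hth hE hmt.
set N := (nI + nJ)%N.
set C := Cc R nI nJ mu theta.
have C1 : 1 <= C by apply: (@Cc_ge1 R nI nJ E mu theta i0 hmuE hmu0 hth).
exists (nI%:R * C ^+ N + N%:R).
move=> w x psi y z hw hx hpsi hnon hxe hsi hsj t t0.
have [Lw [Lw0 hLw]] := @fin_bound R _ w (fun s => 0 <= s <= t)
  (fun i => (hw i).2 t t0).
have [Lx [Lx0 hLx]] := @fin_bound R _ x (fun s => 0 <= s <= t)
  (fun i => (hx i).2 t t0).
have [Lp [Lp0 hLp]] := @fin_bound R _ (fun p : 'I_nI * 'I_nJ => psi p.1 p.2)
  (fun s => 0 <= s <= t) (fun p => (hpsi p.1 p.2).2 t t0).
set W := supnorm w t.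
have hsup : has_sup [set norm1 (fun i => w i s) | s in `[0, t]%classic].
  split.
    exists (norm1 (fun i => w i 0)); exists 0 => //=.
    by rewrite in_itv /= lexx t0.
  exists (nI%:R * Lw) => r [s hs <-].
  rewrite /norm1; apply: le_trans (_ : \sum_(i < nI) Lw <= _).
    apply: ler_sum => i _; apply: hLw; move: hs; rewrite /= in_itv /=; done.
  by rewrite sumr_const card_ord mulr_natl.
have hW : forall i s, 0 <= s <= t -> `|w i s| <= W.
  move=> i s hs; apply: le_trans (_ : norm1 (fun i => w i s) <= _).
    by rewrite /norm1 (bigD1 i) //= lerDl; apply: sumr_ge0.
  apply: sup_upper_bound => //; exists s => //=; by rewrite in_itv.
have W0 : 0 <= W by apply: le_trans (hW i0 0 _); rewrite ?lexx ?t0.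
set L0 := Num.max Lx Lp.
have hLx' : forall i s, 0 <= s <= t -> `|x i s| <= L0.
  by move=> i s hs; rewrite le_max hLx.
have hLp' : forall i j s, 0 <= s <= t -> `|psi i j s| <= L0.
  by move=> i j s hs; rewrite le_max (hLp (i, j)) ?orbT.
have L00 : 0 <= L0 by rewrite le_max Lx0.
have acyc := tree.2.
have MI := @main_ind R nI nJ E mu theta i0 j0 hmuE hmu0 hth hE hmt w x psi
  (fun i => (hx i).1) (fun i j => (hpsi i j).1) hnon hxe hsi hsj t W L0 t0 L00
  hW hLx' hLp' acyc N [set: ('I_nI + 'I_nJ)%type]%SET W.
have bx : forall i, `|x i t| <= Dc R nI nJ mu theta t ^+ N * W.
  move=> i; apply: MI => //.
  - by rewrite cardsT card_sum !card_ord.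
  - by rewrite finset.in_setT.
  - by rewrite finset.in_setT.
  - by split => [k|k j]; rewrite !finset.in_setT.
  - by rewrite t0 lexx.
have hnorm : norm1 (fun i => x i t) <= nI%:R * (Dc R nI nJ mu theta t ^+ N * W).
  rewrite /norm1; apply: le_trans (_ : \sum_(i < nI) (Dc R nI nJ mu theta t ^+ N * W) <= _).
    by apply: ler_sum => i _; exact: bx.
  by rewrite sumr_const card_ord mulr_natl.
apply: le_trans hnorm _.
rewrite /Dc -/C exprMn.
have t1 : 1 <= 1 + t by rewrite lerDl.
have pw : (1 + t) ^+ N <= powR (1 + t) (nI%:R * C ^+ N + N%:R).
  rewrite -powR_mulrn; last by apply: le_trans t1.
  apply: ler_powR => //; rewrite lerDr; apply: mulr_ge0 => //.
  by apply: exprn_ge0; apply: le_trans C1.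
have m7ge : nI%:R * C ^+ N <= nI%:R * C ^+ N + N%:R by rewrite lerDl.
have C0 : 0 <= C ^+ N by apply: exprn_ge0; apply: le_trans C1.
have tN0 : 0 <= (1 + t) ^+ N by apply: exprn_ge0; apply: le_trans t1.
rewrite !mulrA; apply: ler_wpM2r => //.
apply: ler_pM => //; exact: mulr_ge0.
Qed.
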